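(* Let $q>0$. There is no function $u\in C^{4}(\mathbb{R}^{2})$ with $u>0$ in $\mathbb{R}^{2}$ satisfying $\Delta^{2}u+u^{-q}=0$ in $\mathbb{R}^{2}$.
   Context: $\Delta$ denotes the Laplacian on $\mathbb{R}^{2}$ and $\Delta^{2}=\Delta\Delta$. *)

(* Defs.v *)
From Stdlib Require Import Reals List.
From Coquelicot Require Import Coquelicot.
Open Scope R_scope.

(* Functions on R^2 are represented as curried maps R -> R -> R.
   A direction is a bool: true = d/dx, false = d/dy. *)
Definition partial (b : bool) (f : R -> R -> R) : R -> R -> R :=
  if b then fun x y => Derive (fun t => f t y) x
  else fun x y => Derive (fun t => f x t) y.

Definition ex_partial (b : bool) (f : R -> R -> R) (x y : R) : Prop :=
  if b then ex_derive (fun t => f t y) x else ex_derive (fun t => f x t) y.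

Fixpoint pd (l : list bool) (f : R -> R -> R) : R -> R -> R :=
  match l with
  | nil => f
  | b :: l' => partial b (pd l' f)
  end.

Definition Ck2 (k : nat) (f : R -> R -> R) : Prop :=
  (forall (l : list bool) (b : bool) (x y : R),
      (length l < k)%nat -> ex_partial b (pd l f) x y) /\
  (forall (l : list bool) (p : R * R),
      (length l <= k)%nat ->
      continuous (fun z : R * R => pd l f (fst z) (snd z)) p).

Definition laplacian (f : R -> R -> R) : R -> R -> R :=
  fun x y => pd (true :: true :: nil) f x y + pd (false :: false :: nil) f x y.

(* Main.v *)
Require Import Defs.
From Stdlib Require Import Reals Lra List FunctionalExtensionality.
From Coquelicot Require Import Coquelicot.
Open Scope R_scope.

Lemma D_plus (f g : R -> R) (x a b : R) : is_derive f x a -> is_derive g x b ->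
  is_derive (fun t => f t + g t) x (a + b).
Proof. intros H1 H2. exact (is_derive_plus f g x a b H1 H2). Qed.

Lemma D_mul (f g : R -> R) (x a b : R) : is_derive f x a -> is_derive g x b ->
  is_derive (fun t => f t * g t) x (a * g x + f x * b).
Proof. intros H1 H2.
  exact (is_derive_mult f g x a b H1 H2 Rmult_comm). Qed.

Lemma D_eq (f : R -> R) (x a b : R) : is_derive f x a -> a = b -> is_derive f x b.
Proof. intros H ->; exact H. Qed.

Definition pc (G : R -> R -> R) := forall p : R * R, continuous (fun z => G (fst z) (snd z)) p.

Lemma chain (g : R -> R -> R) :
  (forall b x y, ex_partial b g x y) -> pc (partial true g) ->
  forall a bb a' b' t, is_derive a t a' -> is_derive bb t b' ->
  is_derive (fun s => g (a s) (bb s)) t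
    (partial true g (a t) (bb t) * a' + partial false g (a t) (bb t) * b').
Proof.
  intros hex hc a bb a' b' t ha hb.
  apply is_derive_Reals.
  apply derivable_pt_lim_comp_2d; try (apply is_derive_Reals; assumption).
  apply filterdiff_differentiable_pt_lim.
  eapply filterdiff_ext_lin.
  - apply is_derive_filterdiff with (dfx := partial true g).
    + apply filter_forall. intros [u v]. simpl. apply Derive_correct. exact (hex true u v).
    + apply Derive_correct. exact (hex false (a t) (bb t)).
    + exact (hc (a t, bb t)).
  - intros [u v]. simpl. reflexivity.
Qed.

Lemma pc_plus G1 G2 : pc G1 -> pc G2 -> pc (fun x y => G1 x y + G2 x y).
Proof. intros h1 h2 p. exact (continuous_plus _ _ p (h1 p) (h2 p)). Qed.

Lemma pc_mult G1 G2 : pc G1 -> pc G2 -> pc (fun x y => G1 x y * G2 x y).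
Proof. intros h1 h2 p. exact (continuous_mult _ _ p (h1 p) (h2 p)). Qed.

Lemma pc_opp G : pc G -> pc (fun x y => - G x y).
Proof. intros h p.
  apply (continuous_ext (fun z => (-1) * G (fst z) (snd z))). intros; simpl; ring.
  exact (continuous_mult (fun _ => -1) _ p (continuous_const _ p) (h p)). Qed.

Lemma pc_fst : pc (fun x y => x).
Proof. intros [x y]. apply continuous_fst. Qed.

Lemma pc_snd : pc (fun x y => y).
Proof. intros [x y]. apply continuous_snd. Qed.

Lemma cont_cos x : continuous cos x.
Proof. apply (ex_derive_continuous (K:=R_AbsRing) (V:=R_NormedModule)). auto_derive. auto. Qed.
Lemma cont_sin x : continuous sin x.
Proof. apply (ex_derive_continuous (K:=R_AbsRing) (V:=R_NormedModule)). auto_derive. auto. Qed.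

Lemma pc_cos : pc (fun x y => cos y).
Proof. intros p. apply (continuous_comp (fun z : R * R => snd z) cos).
  destruct p; apply continuous_snd. apply cont_cos. Qed.
Lemma pc_sin : pc (fun x y => sin y).
Proof. intros p. apply (continuous_comp (fun z : R * R => snd z) sin).
  destruct p; apply continuous_snd. apply cont_sin. Qed.

Lemma pc_polar G : pc G -> pc (fun r t => G (r * cos t) (r * sin t)).
Proof. intros h p.
  apply (continuous_comp_2 (fun z : R * R => fst z * cos (snd z))
                           (fun z : R * R => fst z * sin (snd z)) G).
  - exact (pc_mult _ _ pc_fst pc_cos p).
  - exact (pc_mult _ _ pc_fst pc_sin p).
  - apply h.
Qed.

Lemma pc_t G r t : pc G -> continuous (fun t => G r t) t.
Proof. intros h.
  apply (continuous_comp_2 (fun _ : R => r) (fun t => t) G).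
  apply continuous_const. apply continuous_id. apply h. Qed.

Lemma pc_2d G x y : pc G -> continuity_2d_pt G x y.
Proof. intros h. apply continuity_2d_pt_filterlim. apply (h (x, y)). Qed.

Lemma exR G r a b : pc G -> ex_RInt (fun t => G r t) a b.
Proof. intros h. apply (ex_RInt_continuous (V:=R_CompleteNormedModule)). intros z _. apply pc_t. exact h. Qed.

Lemma param (G dG : R -> R -> R) :
  (forall u v, is_derive (fun z => G z v) u (dG u v)) -> pc G -> pc dG ->
  forall r, is_derive (fun r => RInt (fun t => G r t) 0 (2*PI)) r
                      (RInt (fun t => dG r t) 0 (2*PI)).
Proof.
  intros hd hG hdG r.
  assert (E : forall u v, Derive (fun z => G z v) u = dG u v).
  { intros u v. apply is_derive_unique. apply hd. }
  assert (E' : (fun u v => Derive (fun z => G z v) u) = dG).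
  { apply functional_extensionality; intro u; apply functional_extensionality; intro v. apply E. }
  eapply D_eq.
  - apply (is_derive_RInt_param G 0 (2*PI) r).
    + apply filter_forall. intros x t _. eexists. apply hd.
    + intros t _. rewrite E'. apply pc_2d. exact hdG.
    + apply filter_forall. intros y. apply exR. exact hG.
  - apply RInt_ext. intros x _. apply E.
Qed.

Lemma alg r c s X Y XX XY YX YY : c*c + s*s = 1 ->
  r*(X*c + Y*s) + r*r*((XX*c+XY*s)*c + (YX*c+YY*s)*s) =
  r*r*(XX+YY) - ((XX*(-(r*s)) + XY*(r*c))*(-(r*s)) + X*(-(r*c)) + ((YX*(-(r*s)) + YY*(r*c))*(r*c) + Y*(-(r*s)))).
Proof. intros h. replace (r*r*(XX+YY)) with (r*r*(XX+YY)*(c*c+s*s)) by (rewrite h; ring). ring. Qed.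

Section Gen.
Variable f : R -> R -> R.
Hypothesis hf : Ck2 2 f.

Lemma ex1 : forall b x y, ex_partial b f x y.
Proof. intros b x y. apply (proj1 hf nil). simpl. auto. Qed.
Lemma ex2 : forall b b' x y, ex_partial b (partial b' f) x y.
Proof. intros b b' x y. apply (proj1 hf (b' :: nil)). simpl. auto. Qed.
Lemma c0 : pc f.
Proof. intros p. apply (proj2 hf nil). simpl. auto. Qed.
Lemma c1 : forall b, pc (partial b f).
Proof. intros b p. apply (proj2 hf (b :: nil)). simpl. auto. Qed.
Lemma c2 : forall b b', pc (partial b (partial b' f)).
Proof. intros b b' p. apply (proj2 hf (b :: b' :: nil)). simpl. auto. Qed.

Definition fx := partial true f.
Definition fy := partial false f.
Definition Fp r t := f (r * cos t) (r * sin t).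
Definition Pp r t := fx (r * cos t) (r * sin t) * cos t + fy (r * cos t) (r * sin t) * sin t.
Definition Qp r t :=
  (partial true fx (r * cos t) (r * sin t) * cos t + partial false fx (r * cos t) (r * sin t) * sin t) * cos t
  + (partial true fy (r * cos t) (r * sin t) * cos t + partial false fy (r * cos t) (r * sin t) * sin t) * sin t.
Definition Tp r t := fx (r * cos t) (r * sin t) * (- (r * sin t)) + fy (r * cos t) (r * sin t) * (r * cos t).
Definition dTp r t :=
  (partial true fx (r * cos t) (r * sin t) * (- (r * sin t)) + partial false fx (r * cos t) (r * sin t) * (r * cos t)) * (- (r * sin t))
  + fx (r * cos t) (r * sin t) * (- (r * cos t))
  + ((partial true fy (r * cos t) (r * sin t) * (- (r * sin t)) + partial false fy (r * cos t) (r * sin t) * (r * cos t)) * (r * cos t)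
     + fy (r * cos t) (r * sin t) * (- (r * sin t))).
Definition Lp r t := laplacian f (r * cos t) (r * sin t).

Lemma dr_cos v u : is_derive (fun z => z * cos v) u (cos v).
Proof. auto_derive; auto; ring. Qed.
Lemma dr_sin v u : is_derive (fun z => z * sin v) u (sin v).
Proof. auto_derive; auto; ring. Qed.
Lemma dt_cos r t : is_derive (fun t => r * cos t) t (- (r * sin t)).
Proof. auto_derive; auto; ring. Qed.
Lemma dt_sin r t : is_derive (fun t => r * sin t) t (r * cos t).
Proof. auto_derive; auto; ring. Qed.
Lemma dcst (c x : R) : is_derive (fun _ : R => c) x 0.
Proof. auto_derive; auto. Qed.

Lemma dFr u v : is_derive (fun z => Fp z v) u (Pp u v).
Proof.
  unfold Fp, Pp. apply (chain f ex1 (c1 true) _ _ _ _ u (dr_cos v u) (dr_sin v u)).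
Qed.

Lemma dPr u v : is_derive (fun z => Pp z v) u (Qp u v).
Proof.
  unfold Pp, Qp. eapply D_eq.
  - apply D_plus; apply D_mul.
    + apply (chain fx (fun b => ex2 b true) (c2 true true) _ _ _ _ u (dr_cos v u) (dr_sin v u)).
    + apply (dcst (cos v) u).
    + apply (chain fy (fun b => ex2 b false) (c2 true false) _ _ _ _ u (dr_cos v u) (dr_sin v u)).
    + apply (dcst (sin v) u).
  - ring_simplify; try ring.
Qed.

Lemma dFt r t : is_derive (fun t => Fp r t) t (Tp r t).
Proof.
  unfold Fp, Tp. apply (chain f ex1 (c1 true) _ _ _ _ t (dt_cos r t) (dt_sin r t)).
Qed.

Lemma dTt r t : is_derive (fun t => Tp r t) t (dTp r t).
Proof.
  unfold Tp, dTp. eapply D_eq.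
  - apply D_plus; apply D_mul.
    + apply (chain fx (fun b => ex2 b true) (c2 true true) _ _ _ _ t (dt_cos r t) (dt_sin r t)).
    + auto_derive; auto.
    + apply (chain fy (fun b => ex2 b false) (c2 true false) _ _ _ _ t (dt_cos r t) (dt_sin r t)).
    + auto_derive; auto.
  - ring_simplify; try ring.
Qed.

Lemma pcF : pc Fp.
Proof. apply pc_polar. apply c0. Qed.
Lemma pcP : pc Pp.
Proof. unfold Pp. apply pc_plus; apply pc_mult; try apply pc_cos; try apply pc_sin;
  apply pc_polar; apply c1. Qed.
Lemma pcQ : pc Qp.
Proof.
  pose (A1 := pc_polar _ (c2 true true)). pose (A2 := pc_polar _ (c2 false true)).
  pose (A3 := pc_polar _ (c2 true false)). pose (A4 := pc_polar _ (c2 false false)).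
  exact (pc_plus _ _
    (pc_mult _ _ (pc_plus _ _ (pc_mult _ _ A1 pc_cos) (pc_mult _ _ A2 pc_sin)) pc_cos)
    (pc_mult _ _ (pc_plus _ _ (pc_mult _ _ A3 pc_cos) (pc_mult _ _ A4 pc_sin)) pc_sin)).
Qed.
Lemma pcdT : pc dTp.
Proof.
  pose (A1 := pc_polar _ (c2 true true)). pose (A2 := pc_polar _ (c2 false true)).
  pose (A3 := pc_polar _ (c2 true false)). pose (A4 := pc_polar _ (c2 false false)).
  pose (X := pc_polar _ (c1 true)). pose (Y := pc_polar _ (c1 false)).
  pose (ms := pc_opp _ (pc_mult _ _ pc_fst pc_sin)).
  pose (mc := pc_opp _ (pc_mult _ _ pc_fst pc_cos)).
  pose (rc := pc_mult _ _ pc_fst pc_cos).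
  exact (pc_plus _ _ (pc_plus _ _
     (pc_mult _ _ (pc_plus _ _ (pc_mult _ _ A1 ms) (pc_mult _ _ A2 rc)) ms)
     (pc_mult _ _ X mc))
     (pc_plus _ _ (pc_mult _ _ (pc_plus _ _ (pc_mult _ _ A3 ms) (pc_mult _ _ A4 rc)) rc)
        (pc_mult _ _ Y ms))).
Qed.
Lemma pcL : pc Lp.
Proof. unfold Lp. apply pc_polar. unfold laplacian. apply pc_plus; apply c2. Qed.

Definition Aa r := RInt (fun t => Fp r t) 0 (2 * PI).
Definition Bb r := RInt (fun t => Pp r t) 0 (2 * PI).
Definition Cc r := RInt (fun t => Qp r t) 0 (2 * PI).
Definition Ll r := RInt (fun t => Lp r t) 0 (2 * PI).

Lemma G1 r : is_derive Aa r (Bb r).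
Proof. exact (param Fp Pp dFr pcF pcP r). Qed.
Lemma G2 r : is_derive Bb r (Cc r).
Proof. exact (param Pp Qp dPr pcP pcQ r). Qed.
Lemma G3 r : is_derive (fun r => r * Bb r) r (Bb r + r * Cc r).
Proof. eapply D_eq. apply D_mul. apply (is_derive_id r). apply G2. unfold one; simpl. ring. Qed.

Lemma G4 r : r <> 0 -> Bb r + r * Cc r = r * Ll r.
Proof.
  intros hr.
  pose proof (RInt_correct _ _ _ (exR Pp r 0 (2*PI) pcP)) as hP.
  pose proof (RInt_correct _ _ _ (exR Qp r 0 (2*PI) pcQ)) as hQ.
  pose proof (RInt_correct _ _ _ (exR Lp r 0 (2*PI) pcL)) as hL.
  pose proof (is_RInt_derive (fun t => Tp r t) (fun t => dTp r t) 0 (2*PI)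
     (fun t _ => dTt r t) (fun t _ => pc_t dTp r t pcdT)) as hT.
  pose proof (is_RInt_plus _ _ _ _ _ _ (is_RInt_scal _ _ _ r _ hP) (is_RInt_scal _ _ _ (r*r) _ hQ)) as h1.
  pose proof (is_RInt_minus _ _ _ _ _ _ (is_RInt_scal _ _ _ (r*r) _ hL) hT) as h2.
  apply (is_RInt_ext _ (fun y => minus (scal (r * r) (Lp r y)) (dTp r y))) in h1.
  - apply (is_RInt_unique (V:=R_CompleteNormedModule)) in h1. apply (is_RInt_unique (V:=R_CompleteNormedModule)) in h2. pose proof (eq_trans (eq_sym h1) h2) as h3. clear h1 h2. rename h3 into h2.
    unfold Tp in h2. rewrite cos_2PI, sin_2PI, cos_0, sin_0 in h2.
    unfold minus, plus, scal, opp in h2. simpl in h2. unfold mult in h2. simpl in h2.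
    apply (Rmult_eq_reg_l r); auto. unfold Bb, Cc, Ll.
    ring_simplify. ring_simplify in h2. lra.
  - intros t _. unfold minus, plus, scal, opp. simpl. unfold mult. simpl.
    assert (hc : cos t * cos t + sin t * sin t = 1).
    { pose proof (sin2_cos2 t) as H. unfold Rsqr in H. lra. }
    unfold Pp, Qp, Lp, dTp, laplacian, fx, fy. simpl.
    apply alg. exact hc.
Qed.

Lemma G5 : Bb 0 = 0.
Proof.
  unfold Bb.
  rewrite (RInt_ext _ (fun t => fx 0 0 * cos t + fy 0 0 * sin t)).
  2: { intros t _. unfold Pp. rewrite !Rmult_0_l. reflexivity. }
  assert (hd : forall x, Rmin 0 (2*PI) <= x <= Rmax 0 (2*PI) ->
     is_derive (fun t => fx 0 0 * sin t - fy 0 0 * cos t) x (fx 0 0 * cos x + fy 0 0 * sin x)).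
  { intros x _. auto_derive; auto. ring. }
  assert (hc : forall x, Rmin 0 (2*PI) <= x <= Rmax 0 (2*PI) ->
     continuous (fun t => fx 0 0 * cos t + fy 0 0 * sin t) x).
  { intros x _. apply (ex_derive_continuous (K:=R_AbsRing) (V:=R_NormedModule)). auto_derive. auto. }
  pose proof (is_RInt_derive (V:=R_CompleteNormedModule) (fun t => fx 0 0 * sin t - fy 0 0 * cos t)
    (fun t => fx 0 0 * cos t + fy 0 0 * sin t) 0 (2*PI) hd hc) as H.
  rewrite (is_RInt_unique (V:=R_CompleteNormedModule) _ _ _ _ H).
  unfold minus, plus, opp. simpl. rewrite cos_2PI, sin_2PI, cos_0, sin_0. ring.
Qed.

End Gen.

Lemma mono (f df : R -> R) a b : a <= b ->
  (forall x, a <= x <= b -> is_derive f x (df x)) ->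
  (forall x, a <= x <= b -> df x <= 0) -> f b <= f a.
Proof.
  intros hab hd hn.
  destruct (MVT_gen f a b df) as [c [hc e]].
  - intros x hx. rewrite Rmin_left, Rmax_right in hx by lra. apply hd. lra.
  - intros x hx. rewrite Rmin_left, Rmax_right in hx by lra.
    apply continuity_pt_filterlim. apply (ex_derive_continuous (K:=R_AbsRing) (V:=R_NormedModule)).
    eexists. apply hd. lra.
  - rewrite Rmin_left, Rmax_right in hc by lra.
    pose proof (hn c hc). nra.
Qed.

Lemma smono (f df : R -> R) a b : a < b ->
  (forall x, a <= x <= b -> is_derive f x (df x)) ->
  (forall x, a <= x <= b -> df x < 0) -> f b < f a.
Proof.
  intros hab hd hn.
  destruct (MVT_gen f a b df) as [c [hc e]].
  - intros x hx. rewrite Rmin_left, Rmax_right in hx by lra. apply hd. lra.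
  - intros x hx. rewrite Rmin_left, Rmax_right in hx by lra.
    apply continuity_pt_filterlim. apply (ex_derive_continuous (K:=R_AbsRing) (V:=R_NormedModule)).
    eexists. apply hd. lra.
  - rewrite Rmin_left, Rmax_right in hc by lra.
    pose proof (hn c hc). nra.
Qed.

Lemma oneD (Aw Bw Cw Lw Au Bu Cu : R -> R) :
 (forall r, is_derive Aw r (Bw r)) ->
 (forall r, is_derive (fun r => r * Bw r) r (Bw r + r * Cw r)) ->
 (forall r, r <> 0 -> Bw r + r * Cw r = r * Lw r) -> (forall r, Lw r < 0) -> Bw 0 = 0 ->
 (forall r, is_derive Au r (Bu r)) ->
 (forall r, is_derive (fun r => r * Bu r) r (Bu r + r * Cu r)) ->
 (forall r, r <> 0 -> Bu r + r * Cu r = r * Aw r) ->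
 (forall r, 0 <= Au r) -> False.
Proof.
  intros dAw dHw ew hL hB0 dAu dHu eu hpos.
  assert (s1 : (1/2) * Bw (1/2) <= 0 * Bw 0).
  { apply (mono (fun r => r * Bw r) (fun r => Bw r + r * Cw r)). lra.
    intros; apply dHw.
    intros x hx. destruct (Req_dec x 0) as [->|hx0].
    - rewrite hB0. lra.
    - rewrite ew by auto. pose proof (hL x). nra. }
  assert (s2 : 1 * Bw 1 < (1/2) * Bw (1/2)).
  { apply (smono (fun r => r * Bw r) (fun r => Bw r + r * Cw r)). lra.
    intros; apply dHw.
    intros x hx. rewrite ew by lra. pose proof (hL x). nra. }
  set (a := - (1 * Bw 1)).
  assert (ha : 0 < a) by (unfold a; lra).
  assert (s4 : forall r, 1 <= r -> Bw r + a * / r <= 0).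
  { intros r hr.
    assert (h : r * Bw r <= 1 * Bw 1).
    { apply (mono (fun r => r * Bw r) (fun r => Bw r + r * Cw r)). lra.
      intros; apply dHw.
      intros x hx. rewrite ew by lra. pose proof (hL x). nra. }
    assert (E : (Bw r + a * / r) * r = r * Bw r + a) by (field; lra).
    assert (E2 : (Bw r + a * / r) * r <= 0) by (rewrite E; unfold a in *; lra).
    nra. }
  assert (s5 : forall r, 1 <= r -> Aw r + a * ln r <= Aw 1).
  { intros r hr.
    replace (Aw 1) with (Aw 1 + a * ln 1) by (rewrite ln_1; ring).
    apply (mono (fun r => Aw r + a * ln r) (fun r => Bw r + a * / r)). lra.
    - intros x hx. apply D_plus. apply dAw. apply is_derive_scal. apply is_derive_ln. lra.
    - intros x hx. apply s4. lra. }
  set (R1 := exp ((Rabs (Aw 1) + 1) / a)).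
  assert (hR1 : 1 <= R1).
  { unfold R1. pose proof (exp_ineq1 ((Rabs (Aw 1) + 1) / a)).
    assert (0 < (Rabs (Aw 1) + 1) / a). { apply Rdiv_lt_0_compat. pose proof (Rabs_pos (Aw 1)). lra. lra. }
    lra. }
  assert (s6 : forall r, R1 <= r -> Aw r <= -1).
  { intros r hr. pose proof (s5 r ltac:(lra)).
    assert (ln R1 <= ln r) by (apply ln_le; lra).
    unfold R1 in H0. rewrite ln_exp in H0.
    assert (a * ((Rabs (Aw 1) + 1) / a) = Rabs (Aw 1) + 1) by (field; lra).
    pose proof (Rle_abs (Aw 1)). nra. }
  set (K := R1 * Bu R1 + R1 * R1 / 2).
  assert (s7 : forall r, R1 <= r -> r * Bu r + r * r / 2 <= K).
  { intros r hr. unfold K.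
    apply (mono (fun r => r * Bu r + r * r / 2) (fun r => (Bu r + r * Cu r) + r)). lra.
    - intros x hx. apply D_plus. apply dHu.
      assert (is_derive (fun r : R => r * r / 2) x x) by (auto_derive; auto; field). exact H.
    - intros x hx. rewrite eu by lra. pose proof (s6 x ltac:(lra)). nra. }
  set (R2 := Rmax R1 (2 * Rabs K + 2)).
  assert (hR2 : R1 <= R2 /\ 2 * Rabs K + 2 <= R2) by (split; [apply Rmax_l | apply Rmax_r]).
  assert (s8 : forall r, R2 <= r -> Bu r + 1 <= 0).
  { intros r hr. pose proof (s7 r ltac:(lra)). pose proof (Rle_abs K). pose proof (Rabs_pos K).
    assert (h1 : r * (r/2 - 1) >= 2 * (r/2 - 1)) by nra.
    assert (h2 : r * (Bu r + 1) <= 0) by nra.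
    nra. }
  assert (s9 : forall r, R2 <= r -> Au r + r <= Au R2 + R2).
  { intros r hr.
    apply (mono (fun r => Au r + r) (fun r => Bu r + 1)). lra.
    - intros x hx. apply D_plus. apply dAu. apply (is_derive_id x).
    - intros x hx. apply s8. lra. }
  pose proof (s9 (R2 + Au R2 + 1)) as h. pose proof (hpos R2). pose proof (hpos (R2 + Au R2 + 1)).
  specialize (h ltac:(lra)). lra.
Qed.

Lemma pd_app l m g : pd (l ++ m) g = pd l (pd m g).
Proof. induction l as [|b l IH]; simpl; [reflexivity | rewrite IH; reflexivity]. Qed.

Lemma Ck2_shift n k m g : Ck2 n g -> (length m + k <= n)%nat -> Ck2 k (pd m g).
Proof.
  intros [h1 h2] hk. split.
  - intros l b x y hl. rewrite <- pd_app. apply h1. rewrite length_app. Lia.lia.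
  - intros l p hl. rewrite <- pd_app. apply h2. rewrite length_app. Lia.lia.
Qed.

Lemma pd_plus k g1 g2 :
  (forall l b x y, (length l < k)%nat -> ex_partial b (pd l g1) x y) ->
  (forall l b x y, (length l < k)%nat -> ex_partial b (pd l g2) x y) ->
  forall l, (length l <= k)%nat -> forall x y,
    pd l (fun x y => g1 x y + g2 x y) x y = pd l g1 x y + pd l g2 x y.
Proof.
  intros e1 e2 l. induction l as [|b l IH]; intros hl x y; simpl.
  - reflexivity.
  - simpl in hl. assert (hl' : (length l <= k)%nat) by Lia.lia.
    assert (hl2 : (length l < k)%nat) by Lia.lia.
    destruct b; unfold partial.
    + rewrite (Derive_ext _ (fun t => pd l g1 t y + pd l g2 t y)) by (intro; apply IH; auto).
      apply Derive_plus. apply (e1 l true x y hl2). apply (e2 l true x y hl2).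
    + rewrite (Derive_ext _ (fun t => pd l g1 x t + pd l g2 x t)) by (intro; apply IH; auto).
      apply Derive_plus. apply (e1 l false x y hl2). apply (e2 l false x y hl2).
Qed.

Lemma Ck2_plus k g1 g2 : Ck2 k g1 -> Ck2 k g2 -> Ck2 k (fun x y => g1 x y + g2 x y).
Proof.
  intros [a1 b1] [a2 b2]. split.
  - intros l b x y hl. assert (hl' : (length l <= k)%nat) by Lia.lia.
    destruct b; simpl.
    + apply (ex_derive_ext (fun t => pd l g1 t y + pd l g2 t y)).
      { intro t. symmetry. apply (pd_plus k); auto. }
      exact (ex_derive_plus _ _ x (a1 l true x y hl) (a2 l true x y hl)).
    + apply (ex_derive_ext (fun t => pd l g1 x t + pd l g2 x t)).
      { intro t. symmetry. apply (pd_plus k); auto. }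
      exact (ex_derive_plus _ _ y (a1 l false x y hl) (a2 l false x y hl)).
  - intros l p hl.
    apply (continuous_ext (fun z => pd l g1 (fst z) (snd z) + pd l g2 (fst z) (snd z))).
    { intro z. symmetry. apply (pd_plus k); auto. }
    exact (continuous_plus _ _ p (b1 l p hl) (b2 l p hl)).
Qed.

Theorem theorem1p2 (q : R) (hq : 0 < q) :
  ~ (exists u : R -> R -> R,
        Ck2 4 u /\
        (forall x y : R, 0 < u x y) /\
        (forall x y : R,
            laplacian (laplacian u) x y + Rpower (u x y) (- q) = 0)).
Proof.
  intros [u [hu [hpos heq]]].
  assert (hu2 : Ck2 2 u) by exact (Ck2_shift 4 2 nil u hu ltac:(simpl; Lia.lia)).
  assert (hw : Ck2 2 (laplacian u)).
  { unfold laplacian. apply Ck2_plus.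
    - exact (Ck2_shift 4 2 (true :: true :: nil) u hu ltac:(simpl; Lia.lia)).
    - exact (Ck2_shift 4 2 (false :: false :: nil) u hu ltac:(simpl; Lia.lia)). }
  set (w := laplacian u) in *.
  apply (oneD (Aa w) (Bb w) (Cc w) (Ll w) (Aa u) (Bb u) (Cc u)).
  - exact (G1 w hw).
  - exact (G3 w hw).
  - exact (G4 w hw).
  - intros r. unfold Ll.
    assert (h0 : RInt (fun _ : R => 0) 0 (2 * PI) = 0).
    { rewrite RInt_const. unfold scal; simpl; unfold mult; simpl. ring. }
    apply (Rlt_le_trans _ (RInt (fun _ : R => 0) 0 (2 * PI))); [| rewrite h0; lra].
    apply RInt_lt.
    + pose proof PI_RGT_0. lra.
    + intros; apply continuous_const.
    + intros x _. exact (pc_t (Lp w) r x (pcL w hw)).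
    + intros x _. unfold Lp. pose proof (heq (r * cos x) (r * sin x)) as e.
      assert (0 < Rpower (u (r * cos x) (r * sin x)) (- q)) by (unfold Rpower; apply exp_pos).
      lra.
  - exact (G5 w).
  - exact (G1 u hu2).
  - exact (G3 u hu2).
  - exact (G4 u hu2).
  - intros r. unfold Aa. apply RInt_ge_0.
    + pose proof PI_RGT_0. lra.
    + exact (exR (Fp u) r 0 (2 * PI) (pcF u hu2)).
    + intros x _. unfold Fp. apply Rlt_le. apply hpos.
Qed.
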